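(* Let $\sigma : X^* \to M$ be a monoid choice of generators for a right cancellative monoid $M$. Then the loop automaton of $M$ with respect to $\sigma$ is the minimal automaton of the loop problem $L_\sigma(M)$.
   Context: Maps are written on the right. $X^*$ is the free monoid on $X$; a choice of generators is a surjective monoid morphism. Let $\overline{X} = \{\overline{x} : x \in X\}$ be new symbols, $\hat{X} = X \cup \overline{X}$. The loop automaton of $M$ w.r.t. $\sigma$ is the automaton over $\hat{X}$ with state set $M$, for each $a \in M$, $x \in X$ an edge $a \to a(x\sigma)$ labelled $x$ and an edge $a(x\sigma) \to a$ labelled $\overline{x}$, with start state and unique terminal state the identity of $M$; the loop problem $L_\sigma(M)$ is the language it accepts. An automaton (possibly infinite) is deterministic if edges are labelled by single letters and each state has at most one outgoing edge with each letter; trim if every state is reachable from the start state and can reach a terminal state. The cone of a state is the set of words labelling paths from it to a terminal state. The minimal automaton of a language $L$ is the unique (up to label-, start- and terminal-preserving isomorphism) deterministic trim automaton accepting $L$ in which no two distinct states have the same cone. *)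

(* Defs.v *)
From Stdlib Require Import List.
Import ListNotations.
Set Implicit Arguments.

(* Alphabet hat X = X + overline X : [inl x] is the letter x, [inr x] is xbar. *)
Definition hat (X : Type) : Type := (X + X)%type.

Record automaton (A : Type) := Automaton {
  state : Type;
  start : state;
  terminal : state -> Prop;
  edge : state -> A -> state -> Prop
}.

Inductive path (A : Type) (aut : automaton A) : state aut -> list A -> state aut -> Prop :=
| path_nil : forall p, path aut p [] p
| path_cons : forall p a q w r,
    edge aut p a q -> path aut q w r -> path aut p (a :: w) r.

Definition cone (A : Type) (aut : automaton A) (p : state aut) (w : list A) : Prop :=
  exists r, path aut p w r /\ terminal aut r.

Definition accepted (A : Type) (aut : automaton A) (w : list A) : Prop :=
  cone aut (start aut) w.

Definition deterministic (A : Type) (aut : automaton A) : Prop :=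
  forall p a q1 q2, edge aut p a q1 -> edge aut p a q2 -> q1 = q2.

Definition trim (A : Type) (aut : automaton A) : Prop :=
  forall q : state aut,
    (exists w, path aut (start aut) w q) /\ (exists w, cone aut q w).

(* [aut] is (a representative of) the minimal automaton of [L]:
   deterministic, trim, accepts L, and distinct states have distinct cones. *)
Definition is_minimal_automaton (A : Type) (aut : automaton A) (L : list A -> Prop) : Prop :=
  deterministic aut /\ trim aut /\ (forall w, accepted aut w <-> L w) /\
  (forall p q : state aut, (forall w, cone aut p w <-> cone aut q w) -> p = q).

(* Loop automaton of the monoid (M, mul, one) w.r.t. sigma : X^* -> M
   (maps written on the right: a(x sigma) = mul a (sigma [x])). *)
Definition loop_automaton (X M : Type) (mul : M -> M -> M) (one : M)
    (sigma : list X -> M) : automaton (hat X) :=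
  {| state := M;
     start := one;
     terminal := fun a => a = one;
     edge := fun a l b =>
       match l with
       | inl x => b = mul a (sigma [x])
       | inr x => a = mul b (sigma [x])
       end |}.

Definition loop_problem (X M : Type) (mul : M -> M -> M) (one : M)
    (sigma : list X -> M) : list (hat X) -> Prop :=
  accepted (loop_automaton mul one sigma).

(* Main.v *)
Require Import Defs.
From Stdlib Require Import List.
Import ListNotations.

Theorem proposition7p1
  (X M : Type) (mul : M -> M -> M) (one : M)
  (mulA : forall a b c, mul a (mul b c) = mul (mul a b) c)
  (mul1m : forall a, mul one a = a)
  (mulm1 : forall a, mul a one = a)
  (right_cancel : forall a b c, mul b a = mul c a -> b = c)
  (sigma : list X -> M)
  (sigma_nil : sigma [] = one)
  (sigma_app : forall u v, sigma (u ++ v) = mul (sigma u) (sigma v))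
  (sigma_surj : forall a : M, exists w, sigma w = a) :
  is_minimal_automaton (loop_automaton mul one sigma) (loop_problem mul one sigma).
Proof.
  set (aut := loop_automaton mul one sigma).
  assert (Hfw : forall w (a : M), path aut a (map inl w) (mul a (sigma w))).
  { induction w as [|x w IH]; intros a; simpl.
    - rewrite sigma_nil, mulm1. constructor.
    - apply path_cons with (q := mul a (sigma [x])); [reflexivity|].
      change (x :: w) with ([x] ++ w). rewrite sigma_app, mulA. apply IH. }
  assert (Hbw : forall w (a : M), path aut (mul a (sigma w)) (map inr (rev w)) a).
  { induction w as [|x w IH] using rev_ind; intros a; simpl.
    - rewrite sigma_nil, mulm1. constructor.
    - rewrite rev_app_distr. simpl.
      apply path_cons with (q := mul a (sigma w)).
      + simpl. rewrite sigma_app, mulA. reflexivity.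
      + apply IH. }
  assert (Hinv : forall w (q r : M), path aut q (map inr (rev w)) r -> q = mul r (sigma w)).
  { induction w as [|x w IH] using rev_ind; intros q r H; simpl in *.
    - inversion H as [p0|]. rewrite sigma_nil, mulm1. reflexivity.
    - rewrite rev_app_distr in H. simpl in H.
      inversion H as [|p0 a0 q0 w0 r0 He Hp]. simpl in He.
      apply IH in Hp. rewrite He, Hp, sigma_app, mulA. reflexivity. }
  split; [|split; [|split]].
  - intros p a q1 q2 H1 H2. destruct a as [x|x]; simpl in *.
    + subst. reflexivity.
    + apply (right_cancel (sigma [x])). rewrite <- H1. exact H2.
  - intros q. destruct (sigma_surj q) as [w Hw]. split.
    + exists (map inl w). simpl. pose proof (Hfw w one) as H.
      rewrite mul1m, Hw in H. exact H.
    + exists (map inr (rev w)). exists one. split; [|reflexivity].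
      pose proof (Hbw w one) as H. rewrite mul1m, Hw in H. exact H.
  - intros w. unfold loop_problem. tauto.
  - intros p q Hc. destruct (sigma_surj p) as [w Hw].
    assert (Hp : cone aut p (map inr (rev w))).
    { exists one. split; [|reflexivity].
      pose proof (Hbw w one) as H. rewrite mul1m, Hw in H. exact H. }
    apply Hc in Hp. destruct Hp as [r [Hr Ht]]. simpl in Ht. subst r.
    apply Hinv in Hr. rewrite mul1m in Hr. congruence.
Qed.
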